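(* Consider a unitary one-parameter channel $\rho_0\mapsto U(\theta)\rho_0U(\theta)^\dagger$ on $\mathbb{C}^d$, with $U(\theta)$ unitary and differentiable in $\theta$, and fixed pure input $\rho_0=|\psi_0\rangle\langle\psi_0|$. Let $H(\theta)$ be the SLD quantum information of $\rho_{out}(\theta)=U(\theta)\rho_0U(\theta)^\dagger$ and $C_\Upsilon(\theta)=4\,\mathrm{tr}\{U'(\theta)\rho_0U'(\theta)^\dagger\}$. Then $H(\theta)=C_\Upsilon(\theta)$ if and only if $\mathrm{tr}\{U(\theta)\rho_0U'(\theta)^\dagger\}=0$.
   Context: A prime denotes $d/d\theta$. The SLD quantum information of a family $\rho(\theta)$ is $H(\theta)=\mathrm{tr}\{\rho\lambda^2\}$ where $\lambda$ is a self-adjoint solution of $\rho'=\frac12(\rho\lambda+\lambda\rho)$. For a unitary channel the canonical Kraus representation consists of the single operator $U(\theta)$, and $C_\Upsilon$ is the Sarovar–Milburn bound $4\sum_k\mathrm{tr}\{\Upsilon_k'\rho_0\Upsilon_k'^\dagger\}$ for it. *)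

(* Defs.v *)
From HB Require Import structures.
From mathcomp Require Import all_boot all_order all_algebra.
From mathcomp Require Import all_classical all_reals all_analysis.
From mathcomp Require Import complex.
Set Implicit Arguments. Unset Strict Implicit. Unset Printing Implicit Defensive.
Import Order.TTheory GRing.Theory Num.Theory.
Local Open Scope ring_scope.

Definition adj (R : realType) (m n : nat) (A : 'M[R[i]]_(m, n)) : 'M[R[i]]_(n, m) :=
  (map_mx (@conjc R) A)^T.

Definition unitary (R : realType) (d : nat) (U : 'M[R[i]]_d) : Prop :=
  U *m adj U = 1%:M /\ adj U *m U = 1%:M.

Definition selfadjoint (R : realType) (d : nat) (A : 'M[R[i]]_d) : Prop :=
  adj A = A.

Definition mx_has_deriv (R : realType) (m n : nat) (F : R -> 'M[R[i]]_(m, n))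
  (t : R) (F' : 'M[R[i]]_(m, n)) : Prop :=
  forall i j, is_derive t 1 (fun s => complex.Re (F s i j)) (complex.Re (F' i j)) /\
              is_derive t 1 (fun s => complex.Im (F s i j)) (complex.Im (F' i j)).

Definition SLD_info (R : realType) (d : nat) (rho : R -> 'M[R[i]]_d) (t : R)
  (h : R[i]) : Prop :=
  exists (rho' lam : 'M[R[i]]_d),
    mx_has_deriv rho t rho' /\ selfadjoint lam /\
    rho' = (2%:R)^-1 *: (rho t *m lam + lam *m rho t) /\
    h = \tr (rho t *m (lam *m lam)).

(* Main.v *)
Require Import Defs.
From HB Require Import structures.
From mathcomp Require Import all_boot all_order all_algebra.
From mathcomp Require Import all_classical all_reals all_analysis.
From mathcomp Require Import complex.
From mathcomp Require Import ring.
Import Order.TTheory GRing.Theory Num.Theory.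
Local Open Scope ring_scope.

Section Cder.
Variable R : realType.
Implicit Types (x y : R[i]).

Lemma ReD x y : complex.Re (x + y) = complex.Re x + complex.Re y.
Proof. by case: x => ? ?; case: y. Qed.
Lemma ImD x y : complex.Im (x + y) = complex.Im x + complex.Im y.
Proof. by case: x => ? ?; case: y. Qed.
Lemma ReM x y : complex.Re (x * y) = complex.Re x * complex.Re y - complex.Im x * complex.Im y.
Proof. by case: x => ? ?; case: y. Qed.
Lemma ImM x y : complex.Im (x * y) = complex.Re x * complex.Im y + complex.Im x * complex.Re y.
Proof. by case: x => ? ?; case: y. Qed.
Lemma ReJ x : complex.Re (x^*)%C = complex.Re x.
Proof. by case: x. Qed.
Lemma ImJ x : complex.Im (x^*)%C = - complex.Im x.
Proof. by case: x. Qed.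

Definition cder (f : R -> R[i]) (t : R) (c : R[i]) :=
  is_derive t 1 (fun s => complex.Re (f s)) (complex.Re c) /\
  is_derive t 1 (fun s => complex.Im (f s)) (complex.Im c).

Lemma cder_uniq f t a b : cder f t a -> cder f t b -> a = b.
Proof.
case=> [[_ ra] [_ ia]] [[_ rb] [_ ib]].
move: ra ia rb ib; case: a => a1 a2; case: b => b1 b2 /= -> -> ra rb.
by rewrite ra rb.
Qed.

Lemma cder_ext f g t c : (forall s, f s = g s) -> cder f t c -> cder g t c.
Proof. by move=> e; have -> : f = g by apply: funext. Qed.

Lemma cder_cst (c : R[i]) t : cder (fun _ => c) t 0.
Proof. split; [exact: (is_derive_cst (complex.Re c) t 1)|exact: (is_derive_cst (complex.Im c) t 1)]. Qed.

Lemma cder_add f g t a b : cder f t a -> cder g t b ->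
  cder (fun s => f s + g s) t (a + b).
Proof.
case=> ra ia [rb ib].
have E1 : (fun s => complex.Re (f s + g s)) = (fun s => complex.Re (f s)) + (fun s => complex.Re (g s)).
  by apply: funext => s /=; exact: ReD.
have E2 : (fun s => complex.Im (f s + g s)) = (fun s => complex.Im (f s)) + (fun s => complex.Im (g s)).
  by apply: funext => s /=; exact: ImD.
split; [rewrite E1|rewrite E2].
- apply: (is_derive_eq (is_deriveD ra rb)). by rewrite ReD.
- apply: (is_derive_eq (is_deriveD ia ib)). by rewrite ImD.
Qed.

Lemma cder_mul f g t a b : cder f t a -> cder g t b ->
  cder (fun s => f s * g s) t (a * g t + f t * b).
Proof.
case=> ra ia [rb ib].
have E1 : (fun s => complex.Re (f s * g s)) = (fun s => complex.Re (f s)) * (fun s => complex.Re (g s)) - (fun s => complex.Im (f s)) * (fun s => complex.Im (g s)).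
  by apply: funext => s /=; exact: ReM.
have E2 : (fun s => complex.Im (f s * g s)) = (fun s => complex.Re (f s)) * (fun s => complex.Im (g s)) + (fun s => complex.Im (f s)) * (fun s => complex.Re (g s)).
  by apply: funext => s /=; exact: ImM.
split; [rewrite E1|rewrite E2].
- apply: (is_derive_eq (is_deriveB (is_deriveM ra rb) (is_deriveM ia ib))).
  rewrite ReD !ReM /GRing.scale /=. ring.
- apply: (is_derive_eq (is_deriveD (is_deriveM ra ib) (is_deriveM ia rb))).
  rewrite ImD !ImM /GRing.scale /=. ring.
Qed.

Lemma cder_conj f t a : cder f t a -> cder (fun s => (f s)^*)%C t (a^*)%C.
Proof.
case=> ra ia.
have E1 : (fun s => complex.Re (f s)^*%C) = (fun s => complex.Re (f s)).
  by apply: funext => s /=; exact: ReJ.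
have E2 : (fun s => complex.Im (f s)^*%C) = - (fun s => complex.Im (f s)).
  by apply: funext => s /=; exact: ImJ.
split; [rewrite E1 ReJ //|rewrite E2 ImJ]; exact: (is_deriveN ia).
Qed.

Lemma cder_sum n (f : 'I_n -> R -> R[i]) t (c : 'I_n -> R[i]) :
  (forall k, cder (f k) t (c k)) ->
  cder (fun s => \sum_(k < n) f k s) t (\sum_(k < n) c k).
Proof.
move=> H; elim: n f c H => [|n IH] f c H.
  rewrite big_ord0; have := cder_cst (0 : R[i]) t; apply: cder_ext => s; by rewrite big_ord0.
rewrite big_ord_recr /=.
have := cder_add _ _ _ _ _ (IH (fun k => f (widen_ord (leqnSn n) k)) (fun k => c (widen_ord (leqnSn n) k)) (fun k => H _)) (H ord_max).
apply: cder_ext => s.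
by rewrite big_ord_recr.
Qed.

End Cder.
Arguments cder_mul {R f g t a b}. Arguments cder_add {R f g t a b}. Arguments cder_conj {R f t a}.
Arguments cder_sum {R n}. Arguments cder_ext {R f g t c}. Arguments cder_uniq {R f t a b}. Arguments cder_cst {R}. Arguments cder {R}.

Section Mx.
Variable R : realType.

Lemma mxd_mul m n p (F : R -> 'M[R[i]]_(m,n)) (G : R -> 'M[R[i]]_(n,p)) t F' G' :
  mx_has_deriv F t F' -> mx_has_deriv G t G' ->
  mx_has_deriv (fun s => F s *m G s) t (F' *m G t + F t *m G').
Proof.
move=> HF HG i j.
have := cder_sum (fun k s => F s i k * G s k j) t
  (fun k => F' i k * G t k j + F t i k * G' k j)
  (fun k => cder_mul (HF i k) (HG k j)).
rewrite big_split /= => H.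
change (cder (fun s => (F s *m G s) i j) t ((F' *m G t + F t *m G') i j)).
rewrite !mxE; apply: cder_ext H => s; by rewrite mxE.
Qed.

Lemma mxd_adj m n (F : R -> 'M[R[i]]_(m,n)) t F' :
  mx_has_deriv F t F' -> mx_has_deriv (fun s => adj (F s)) t (adj F').
Proof.
move=> HF i j.
change (cder (fun s => adj (F s) i j) t (adj F' i j)).
rewrite /adj !mxE; have := cder_conj (HF j i); apply: cder_ext => s; by rewrite !mxE.
Qed.

Lemma mxd_cst m n (A : 'M[R[i]]_(m,n)) t : mx_has_deriv (fun _ => A) t 0.
Proof.
move=> i j; change (cder (fun _ => A i j) t ((0 : 'M[R[i]]_(m,n)) i j)).
rewrite mxE; exact: cder_cst.
Qed.

Lemma mxd_uniq m n (F : R -> 'M[R[i]]_(m,n)) t A B :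
  mx_has_deriv F t A -> mx_has_deriv F t B -> A = B.
Proof. by move=> HA HB; apply/matrixP => i j; apply: (cder_uniq (HA i j) (HB i j)). Qed.

Lemma adj_mul m n p (A : 'M[R[i]]_(m,n)) (B : 'M[R[i]]_(n,p)) :
  adj (A *m B) = adj B *m adj A.
Proof. by rewrite /adj map_mxM trmx_mul. Qed.

Lemma adjK m n (A : 'M[R[i]]_(m,n)) : adj (adj A) = A.
Proof. by apply/matrixP => i j; rewrite /adj !mxE conjcK. Qed.

Lemma adjD m n (A B : 'M[R[i]]_(m,n)) : adj (A + B) = adj A + adj B.
Proof. by apply/matrixP => i j; rewrite /adj !mxE rmorphD. Qed.

Lemma adjN m n (A : 'M[R[i]]_(m,n)) : adj (- A) = - adj A.
Proof. by apply/matrixP => i j; rewrite /adj !mxE rmorphN. Qed.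

Lemma adjZ m n (c : R[i]) (A : 'M[R[i]]_(m,n)) : adj (c *: A) = (c^*)%C *: adj A.
Proof. by apply/matrixP => i j; rewrite /adj !mxE rmorphM. Qed.

Lemma mxd_add m n (F G : R -> 'M[R[i]]_(m,n)) t A B :
  mx_has_deriv F t A -> mx_has_deriv G t B -> mx_has_deriv (fun s => F s + G s) t (A + B).
Proof.
move=> HF HG i j; change (cder (fun s => (F s + G s) i j) t ((A + B) i j)).
rewrite mxE; have := cder_add (HF i j) (HG i j); apply: cder_ext => s; by rewrite mxE.
Qed.
End Mx.
Arguments mxd_mul {R m n p F G t F' G'}. Arguments mxd_adj {R m n F t F'}.
Arguments mxd_cst {R m n}. Arguments mxd_uniq {R m n F t A B}. Arguments mxd_add {R m n F G t A B}.

Theorem lemma4 (R : realType) (d : nat) (U U' : R -> 'M[R[i]]_d)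
  (psi0 : 'cV[R[i]]_d) (theta : R) :
  (forall t, unitary (U t)) ->
  (forall t, mx_has_deriv U t (U' t)) ->
  adj psi0 *m psi0 = 1%:M ->
  let rho0 := psi0 *m adj psi0 in
  let rho_out := fun t => U t *m rho0 *m adj (U t) in
  let C_ups := 4%:R * \tr (U' theta *m rho0 *m adj (U' theta)) in
  (exists h, SLD_info rho_out theta h) /\
  (forall h, SLD_info rho_out theta h ->
     (h = C_ups <-> \tr (U theta *m rho0 *m adj (U' theta)) = 0)).
Proof.
move=> Hu HU Hpsi rho0 rho_out C_ups.
set U0 := U theta; set U1 := U' theta.
set v := U0 *m psi0; set w := U1 *m psi0.
set D := w *m adj v + v *m adj w.
have HD : mx_has_deriv rho_out theta D.
  have := mxd_mul (mxd_mul (HU theta) (mxd_cst rho0 theta)) (mxd_adj (HU theta)).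
  rewrite mulmx0 addr0 => H.
  suff -> : D = U1 *m rho0 *m adj U0 + U0 *m rho0 *m adj U1 by [].
  by rewrite /D /v /w !adj_mul /rho0 !mulmxA.
have HK : adj U1 *m U0 + adj U0 *m U1 = 0.
  have H1 := mxd_mul (mxd_adj (HU theta)) (HU theta).
  have H2 : mx_has_deriv (fun s => adj (U s) *m U s) theta 0.
    have -> : (fun s => adj (U s) *m U s) = (fun _ => 1%:M).
      by apply: funext => s; case: (Hu s).
    exact: mxd_cst.
  exact: (mxd_uniq H1 H2).
have Hvv : adj v *m v = 1%:M.
  rewrite /v adj_mul -mulmxA [adj U0 *m _]mulmxA.
  by case: (Hu theta) => _ ->; rewrite mul1mx.
set B := adj v *m w.
have HwB : adj w *m v = - B.
  apply/eqP; rewrite -addr_eq0 /B /v /w !adj_mul.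
  rewrite !mulmxA -mulmxDl -!(mulmxA (adj psi0)) -mulmxDr.
  by rewrite HK mulmx0 mul0mx.
have Hrho : rho_out theta = v *m adj v.
  by rewrite /rho_out /rho0 /v adj_mul !mulmxA.
have two0 : (2%:R : R[i]) != 0 by rewrite pnatr_eq0.
have HDv : D *m v = w - v *m B.
  by rewrite /D mulmxDl -[w *m adj v *m v]mulmxA -[v *m adj w *m v]mulmxA Hvv HwB mulmx1 mulmxN.
have KD : v *m adj v *m D + D *m (v *m adj v) = D.
  have E1 : v *m adj v *m D = v *m B *m adj v + v *m adj w.
    rewrite /D mulmxDr -[v *m adj v *m (w *m _)]mulmxA [adj v *m (w *m _)]mulmxA -/B.
    by rewrite -[v *m adj v *m (v *m _)]mulmxA [adj v *m (v *m _)]mulmxA Hvv mul1mx !mulmxA.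
  have E2 : D *m (v *m adj v) = w *m adj v - v *m B *m adj v.
    by rewrite mulmxA HDv mulmxBl.
  rewrite E1 E2 /D.
  by rewrite addrC addrA subrK.
split.
  pose lam := 2%:R *: D.
  exists (\tr (rho_out theta *m (lam *m lam))), D, lam; split => //; split.
    by rewrite /selfadjoint /lam adjZ conjc_nat /D adjD !adj_mul !adjK addrC.
  split => //.
  rewrite Hrho /lam -scalemxAr -scalemxAl -scalerDr KD scalerA mulVf //.
  by rewrite scale1r.
move=> h [rho' [lam [Hd [Hsa [Heq Hh]]]]].
have Erho : rho' = D := mxd_uniq Hd HD.
rewrite Erho Hrho in Heq Hh.
set x := lam *m v.
set A := adj v *m lam *m v.
have E2 : 2%:R *: D = v *m adj v *m lam + lam *m (v *m adj v).
  by rewrite Heq scalerA mulfV // scale1r.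
have Hx : 2%:R *: (D *m v) = v *m A + x.
  rewrite scalemxAl E2 mulmxDl /A /x; congr (_ + _); first by rewrite !mulmxA.
  by rewrite -mulmxA -[v *m adj v *m v]mulmxA Hvv mulmx1.
have HA : A = 0.
  have : adj v *m (2%:R *: (D *m v)) = A + A.
    by rewrite Hx mulmxDr mulmxA Hvv mul1mx /x /A mulmxA.
  rewrite HDv -scalemxAr mulmxBr [adj v *m (v *m B)]mulmxA Hvv mul1mx -/B subrr scaler0.
  move/eqP; rewrite eq_sym -mulr2n -scaler_nat scaler_eq0 (negbTE two0) /=.
  by move/eqP.
have Hxx : x = 2%:R *: (w - v *m B).
  by rewrite -HDv Hx HA mulmx0 add0r.
have Hh' : h = \tr (adj x *m x).
  rewrite Hh -mulmxA mxtrace_mulC /x adj_mul Hsa.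
  by rewrite !mulmxA.
have HadjB : adj B = - B by rewrite /B adj_mul adjK HwB.
have Hq : adj x *m x = 4%:R *: (adj w *m w + B *m B).
  rewrite Hxx adjZ conjc_nat -scalemxAl -scalemxAr scalerA -natrM.
  congr (_ *: _).
  rewrite adjD adjN adj_mul HadjB mulNmx opprK mulmxDl !mulmxBr.
  rewrite [adj w *m (v *m B)]mulmxA HwB mulNmx opprK.
  rewrite -[B *m adj v *m w]mulmxA -/B -[B *m adj v *m (v *m B)]mulmxA.
  by rewrite [adj v *m (v *m B)]mulmxA Hvv mul1mx subrr addr0.
have HC : \tr (U1 *m rho0 *m adj U1) = \tr (adj w *m w).
  have -> : U1 *m rho0 *m adj U1 = w *m adj w by rewrite /w adj_mul /rho0 !mulmxA.
  exact: mxtrace_mulC.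
have HT : \tr (U0 *m rho0 *m adj U1) = - B 0 0.
  have -> : U0 *m rho0 *m adj U1 = v *m adj w by rewrite /v adj_mul /rho0 !mulmxA.
  by rewrite mxtrace_mulC HwB /mxtrace big_ord1 mxE.
have trBB : \tr (B *m B) = B 0 0 * B 0 0 by rewrite /mxtrace big_ord1 mxE big_ord1.
rewrite Hh' Hq mxtraceZ mxtraceD trBB /C_ups -/U1 HC -/U0 HT.
set b := B 0 0; set T := \tr (adj w *m w).
split => [E|E].
  have : 4%:R * (b * b) == 0.
    by rewrite -(addKr (4%:R * T) (4%:R * (b * b))) -mulrDr E addNr.
  rewrite !mulf_eq0 pnatr_eq0 orbb /= => /eqP ->; by rewrite oppr0.
have -> : b = 0 by rewrite -[b]opprK E oppr0.
by rewrite mulr0 addr0.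
Qed.
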